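(* Let $(G,M,I)$ be a finite formal context and let $(H_0(\mathcal F_k))_{k\ge 0}$ be the chain complex obtained by taking zeroth cellular cosheaf homology of each cosheaf $\mathcal F_k:\sigma\mapsto C_k(\Delta[\sigma'])$ on $D(G,M,I)$, with differentials induced by the simplicial boundary maps. Then the homology of this chain complex in degree $k$ is isomorphic to the real simplicial homology $H_k(D(M,G,I^T);\mathbb R)$ of the dual Dowker complex, for every $k\ge 0$.
   Context: A formal context is a triple $(G,M,I)$ with $I\subseteq G\times M$; for $A\subseteq G$, $A'=\{m: gIm\ \forall g\in A\}$, for $B\subseteq M$, $B'=\{g: gIm\ \forall m\in B\}$. The Dowker complex $D(G,M,I)$ is the abstract simplicial complex on $G$ whose simplices are the nonempty $\sigma\subseteq G$ with $\sigma'\ne\emptyset$; $D(M,G,I^T)$ is the abstract simplicial complex on $M$ whose simplices are the nonempty $S\subseteq M$ with $S'\neq\emptyset$. $C_k(\Delta[S])$ is the space of real oriented simplicial $k$-chains of the full simplex on $S$; for $\sigma\subseteq\tau$ the extension $\mathcal F_k(\tau)\to\mathcal F_k(\sigma)$ is induced by $\tau'\subseteq\sigma'$. Cellular cosheaf homology of a cosheaf $\mathcal F$ on $D(G,M,I)$ is the homology of $C_j=\bigoplus_{\dim\tau=j}\mathcal F(\tau)$ with $\partial_j x=\sum_{i}(-1)^i\mathcal F(\tau_i\subseteq\tau)(x)$ ($\tau_i$ the face omitting the $i$-th vertex in a fixed order), and $H_0=C_0/\partial_1C_1$. *)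

(* Defs.v *)
From HB Require Import structures.
From mathcomp Require Import all_boot all_order all_algebra.
From mathcomp Require Import reals.
Set Implicit Arguments. Unset Strict Implicit. Unset Printing Implicit Defensive.
Import Order.TTheory GRing.Theory Num.Theory.
Local Open Scope ring_scope.

(* Chains on a finite vertex type T are functions {set T} -> R; the coefficient
   of a simplex tau (a (k+1)-subset) is c tau.  Orientation is fixed by the
   order of T given by enum_rank. *)

Section Chains.
Variables (R : realType) (T : finType).

Definition chain := {ffun {set T} -> R^o}.

Definition sgn (m : T) (tau : {set T}) : R :=
  (-1) ^+ #|[set x in tau | (enum_rank x < enum_rank m)%N]|.

(* Simplicial boundary: d[v0..vk] = sum_i (-1)^i [v0..^vi..vk];
   coefficient of tau in d c is sum over sigma = m |: tau, m \notin tau.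
   The coefficient on the empty set is forced to 0 (unreduced: d_0 = 0). *)
Definition bd (c : chain) : chain :=
  [ffun tau => if tau == set0 then 0
               else \sum_(m | m \notin tau) sgn m (m |: tau) * c (m |: tau)].

Definition is_chain_on (k : nat) (S : {set T}) (c : chain) : Prop :=
  forall tau, c tau != 0 -> (tau \subset S) && (#|tau| == k.+1).

End Chains.

Section Context.
Variables (R : realType) (G M : finType) (I : G -> M -> bool).

Definition intentG (A : {set G}) : {set M} := [set m | [forall g in A, I g m]].
Definition extentM (B : {set M}) : {set G} := [set g | [forall m in B, I g m]].

Definition dowkerG (s : {set G}) : bool := (s != set0) && (intentG s != set0).
Definition dowkerM (S : {set M}) : bool := (S != set0) && (extentM S != set0).

Definition is_Dchain (k : nat) (c : chain R M) : Prop :=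
  forall S, c S != 0 -> dowkerM S && (#|S| == k.+1).

Definition dual_cycle (k : nat) (c : chain R M) : Prop :=
  is_Dchain k c /\ bd c = 0.

Definition dual_boundary (k : nat) (c : chain R M) : Prop :=
  exists d, is_Dchain k.+1 d /\ bd d = c.

(* An element of C_j(D(G); F_k) = (+)_{dim s = j} C_k(Delta[s']) is a function
   x assigning to every simplex s of dimension j a k-chain x s on Delta[s']. *)
Definition cchain := {ffun {set G} -> chain R M}.

Definition is_cchain (j k : nat) (x : cchain) : Prop :=
  (forall s, x s != 0 -> dowkerG s && (#|s| == j.+1)) /\
  (forall s, is_chain_on k (intentG s) (x s)).

(* cellular boundary C_1 -> C_0: the extension maps F_k(t) -> F_k(s) for s in t
   are the inclusions C_k(Delta[t']) -> C_k(Delta[s']) (identity on coefficients);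
   the face t_i omitting the i-th vertex h carries sign (-1)^i. *)
Definition cbd1 (y : cchain) : cchain :=
  [ffun s : {set G} => if #|s| == 1%N then \sum_(h | h \notin s) sgn R h (h |: s) *: y (h |: s)
             else 0].

Definition dF (x : cchain) : cchain := [ffun s : {set G} => bd (x s)].

(* Homology in degree k of the complex (H_0(F_k))_k, described as Z/B with
   Z, B subspaces of C_0(D(G);F_k) (pre-images of cycles / boundaries). *)
Definition H0cx_cycle (k : nat) (x : cchain) : Prop :=
  is_cchain 0 k x /\ exists y, is_cchain 1 k.-1 y /\ dF x = cbd1 y.

Definition H0cx_boundary (k : nat) (x : cchain) : Prop :=
  exists w y, is_cchain 0 k.+1 w /\ is_cchain 1 k y /\ x = dF w + cbd1 y.

End Context.

Definition induces_iso (R : realType) (U V : lmodType R)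
  (Z1 B1 : U -> Prop) (Z2 B2 : V -> Prop) (phi : {linear U -> V}) : Prop :=
  [/\ forall x, Z1 x -> Z2 (phi x),
      forall x, B1 x -> B2 (phi x),
      forall x, Z1 x -> B2 (phi x) -> B1 x
    & forall z, Z2 z -> exists x, Z1 x /\ B2 (phi x - z)].

(* Main.v *)
Require Import Defs.
From HB Require Import structures.
From mathcomp Require Import all_boot all_order all_algebra.
From mathcomp Require Import reals.
Set Implicit Arguments. Unset Strict Implicit. Unset Printing Implicit Defensive.
Import Order.TTheory GRing.Theory Num.Theory.
Local Open Scope ring_scope.

Lemma sum_neq0 (V : nmodType) (J : finType) (P : pred J) (F : J -> V) :
  \sum_(i | P i) F i != 0 -> exists i, P i && (F i != 0).
Proof.
move=> H; apply/existsP; apply: contraNT H => /existsPn H.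
by apply/eqP; apply: big1 => i Pi; move: (H i); rewrite Pi /= negbK => /eqP.
Qed.

Lemma ffun_neq0 (aT : finType) (V : nmodType) (f : {ffun aT -> V}) :
  f != 0 -> exists a, f a != 0.
Proof.
move=> H; apply/existsP; apply: contraNT H => /existsPn H.
by apply/eqP/ffunP => a; move: (H a); rewrite negbK ffunE => /eqP.
Qed.

Lemma bd0 (R : realType) (T : finType) : bd (0 : chain R T) = 0.
Proof.
apply/ffunP => tau; rewrite !ffunE; case: ifP => // _.
by apply: big1 => m _; rewrite ffunE mulr0.
Qed.

Lemma bdD (R : realType) (T : finType) (a b : chain R T) : bd (a + b) = bd a + bd b.
Proof.
apply/ffunP => tau; rewrite !ffunE; case: ifP => _; first by rewrite addr0.
by rewrite -big_split; apply: eq_bigr => m _; rewrite ffunE mulrDr.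
Qed.

Lemma bdN (R : realType) (T : finType) (a : chain R T) : bd (- a) = - bd a.
Proof.
apply/ffunP => tau; rewrite !ffunE; case: ifP => _; first by rewrite oppr0.
by rewrite -sumrN; apply: eq_bigr => m _; rewrite ffunE mulrN.
Qed.

Lemma bdB (R : realType) (T : finType) (a b : chain R T) : bd (a - b) = bd a - bd b.
Proof. by rewrite bdD bdN. Qed.

Lemma bd_sum (R : realType) (T J : finType) (F : J -> chain R T) :
  bd (\sum_j F j) = \sum_j bd (F j).
Proof. exact: (big_morph _ (@bdD R T) (@bd0 R T)). Qed.

Lemma bd_chain_on (R : realType) (T : finType) k S (c : chain R T) :
  is_chain_on k S c -> is_chain_on k.-1 S (bd c).
Proof.
move=> H tau; rewrite ffunE; case: ifP => [_|]; first by move/negP.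

move=> t0 /sum_neq0 [m /andP [mt]]; rewrite mulf_eq0 negb_or => /andP [_ /H /andP [sub /eqP cd]].
move: cd; rewrite cardsU1 mt /= add1n => -[cd].
rewrite -cd prednK ?card_gt0 ?t0 // eqxx andbT.
by apply: subset_trans sub; apply: subsetUr.
Qed.

Lemma chain_on0 (R : realType) (T : finType) k S : is_chain_on k S (0 : chain R T).
Proof. by move=> tau; rewrite ffunE eqxx. Qed.

Lemma chain_onD (R : realType) (T : finType) k S (a b : chain R T) :
  is_chain_on k S a -> is_chain_on k S b -> is_chain_on k S (a + b).
Proof.
move=> Ha Hb tau; rewrite ffunE => H.
have [/Ha //|/negbNE /eqP a0] := boolP (a tau != 0).
by apply: Hb; rewrite a0 add0r in H.
Qed.

Lemma chain_onN (R : realType) (T : finType) k S (a : chain R T) :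
  is_chain_on k S a -> is_chain_on k S (- a).
Proof. by move=> Ha tau; rewrite ffunE oppr_eq0; apply: Ha. Qed.

Lemma chain_onB (R : realType) (T : finType) k S (a b : chain R T) :
  is_chain_on k S a -> is_chain_on k S b -> is_chain_on k S (a - b).
Proof. by move=> Ha Hb; apply: chain_onD Ha (chain_onN Hb). Qed.

Lemma intent_ext (G M : finType) (I : G -> M -> bool) (s : {set G}) (S : {set M}) :
  S \subset intentG I s -> s \subset extentM I S.
Proof.
move=> /subsetP H; apply/subsetP => g gs; rewrite inE; apply/forallP => m.
apply/implyP => mS; move: (H m mS); rewrite inE => /forallP /(_ g).
by rewrite gs.
Qed.

Lemma ext_intent (G M : finType) (I : G -> M -> bool) (s : {set G}) (S : {set M}) :
  s \subset extentM I S -> S \subset intentG I s.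
Proof.
move=> /subsetP H; apply/subsetP => m mS; rewrite inE; apply/forallP => g.
apply/implyP => gs; move: (H g gs); rewrite inE => /forallP /(_ m).
by rewrite mS.
Qed.

Lemma sgn_sq (R : realType) (T : finType) (m : T) tau : sgn R m tau * sgn R m tau = 1.
Proof. by rewrite /sgn -expr2 sqrr_sign. Qed.

Lemma sgn2 (R : realType) (T : finType) (h g : T) : h != g ->
  sgn R h [set h; g] = if (enum_rank g < enum_rank h)%N then -1 else 1.
Proof.
move=> hg; rewrite /sgn.
have -> : [set x in [set h; g] | (enum_rank x < enum_rank h)%N] =
          if (enum_rank g < enum_rank h)%N then [set g] else set0.
  apply/setP => x; rewrite !inE.
  case: (eqVneq x h) => [->|xh]; first by rewrite ltnn andbF; case: ifP => _; rewrite ?inE ?(negbTE hg).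
  case: (eqVneq x g) => [->|xg] /=; first by case: ifP => H; rewrite ?inE ?eqxx ?H.
  by case: ifP => _; rewrite ?inE ?(negbTE xg) ?andbF.
by case: ifP; rewrite ?cards1 ?cards0 ?expr1 ?expr0.
Qed.

Lemma sgn_pair (R : realType) (T : finType) (h g : T) : h != g ->
  sgn R g [set h; g] = - sgn R h [set h; g].
Proof.
move=> hg; rewrite [in LHS]setUC (@sgn2 R T g h) 1?eq_sym // (@sgn2 R T h g) //.
case: (ltngtP (enum_rank h) (enum_rank g)) => H; rewrite ?opprK //.
by move/val_inj/enum_rank_inj: H => E; rewrite E eqxx in hg.
Qed.

Lemma sgn_pair_mul (R : realType) (T : finType) (h g : T) : h != g ->
  sgn R h [set h; g] * sgn R g [set h; g] = -1.
Proof. by move=> hg; rewrite sgn_pair // mulrN sgn_sq. Qed.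

Lemma sum_singl (V : nmodType) (G : finType) (F : {set G} -> V) :
  (forall s : {set G}, #|s| != 1%N -> F s = 0) -> \sum_s F s = \sum_g F [set g].
Proof.
move=> H.
transitivity (\sum_s \sum_(g | s == [set g]) F s).
  apply: eq_bigr => s _; case: (boolP (#|s| == 1%N)) => [/cards1P [g0 ->]|/H ->].
    by rewrite (big_pred1 g0) // => g; rewrite eq_sym (inj_eq (@set1_inj _)).
  by rewrite big1.
rewrite (exchange_big_dep xpredT) //=; apply: eq_bigr => g _.
by rewrite (big_pred1 [set g]) // => s.
Qed.

Lemma set2_neq (T : finType) (h a g g0 : T) : g0 != h -> g0 != a ->
  ([set h; a] == [set g; g0]) = false.
Proof.
move=> h1 h2; apply/negbTE/negP => /eqP E.
have : g0 \in [set g; g0] by rewrite !inE eqxx orbT.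
by rewrite -E !inE (negbTE h1) (negbTE h2).
Qed.

Definition phif (R : realType) (G M : finType) (x : cchain R G M) : chain R M :=
  \sum_s x s.

Lemma phif_lin (R : realType) (G M : finType) : linear (@phif R G M).
Proof.
move=> a x y; rewrite /phif.
rewrite scaler_sumr -big_split /=; apply: eq_bigr => s _.
by rewrite !ffunE.
Qed.

HB.instance Definition _ (R : realType) (G M : finType) :=
  GRing.isLinear.Build R (cchain R G M) (chain R M) *:%R (@phif R G M) (@phif_lin R G M).

Lemma phi_cbd1 (R : realType) (G M : finType) (y : cchain R G M) :
  phif (cbd1 y) = 0.
Proof.
rewrite /phif (sum_singl (F := fun s => cbd1 y s)); last first.
  by move=> s /negbTE H; rewrite ffunE H.
pose F (h g : G) := sgn R h [set h; g] *: y [set h; g].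
have E1 : \sum_g cbd1 y [set g] = \sum_g \sum_(h | h != g) F h g.
  apply: eq_bigr => g _; rewrite ffunE cards1 eqxx.
  by apply: eq_bigl => h; rewrite in_set1.
have E2 : \sum_g \sum_(h | h != g) F h g = \sum_g \sum_(h | h != g) F g h.
  rewrite (exchange_big_dep xpredT) //=; apply: eq_bigr => g _.
  by apply: eq_bigl => h; rewrite eq_sym.
rewrite E1.
set T := \sum_g _.
have : T + T = 0.
  rewrite {2}/T E2 /T -big_split /=; apply: big1 => g _.
  rewrite -big_split /=; apply: big1 => h hg.
  rewrite /F [in X in _ + X]setUC (sgn_pair R hg) scaleNr.
  by rewrite subrr.
move=> /eqP; rewrite -mulr2n -scaler_nat scaler_eq0 pnatr_eq0 /=.
by move/eqP.
Qed.

Lemma phi_dF (R : realType) (G M : finType) (x : cchain R G M) :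
  phif (dF x) = bd (phif x).
Proof. by rewrite /phif bd_sum; apply: eq_bigr => s _; rewrite ffunE. Qed.

Lemma dFB (R : realType) (G M : finType) (x w : cchain R G M) :
  dF (x - w) = dF x - dF w.
Proof. by apply/ffunP => s; rewrite !ffunE bdB. Qed.

Lemma cchain0 (R : realType) (G M : finType) (I : G -> M -> bool) j k :
  is_cchain I j k (0 : cchain R G M).
Proof. by split => s; rewrite ffunE ?eqxx //; apply: chain_on0. Qed.

Lemma cchainB (R : realType) (G M : finType) (I : G -> M -> bool) j k (x w : cchain R G M) :
  is_cchain I j k x -> is_cchain I j k w -> is_cchain I j k (x - w).
Proof.
move=> [Hx1 Hx2] [Hw1 Hw2]; split => s; rewrite !ffunE; last first.
  by apply: chain_onB.
have [/Hx1 //|/negbNE /eqP ->] := boolP (x s != 0).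
by rewrite sub0r oppr_eq0; apply: Hw1.
Qed.

Lemma phi_Dchain (R : realType) (G M : finType) (I : G -> M -> bool) k (x : cchain R G M) :
  is_cchain I 0 k x -> is_Dchain I k (phif x).
Proof.
move=> [H1 H2] S; rewrite /phif sum_ffunE => /sum_neq0 [s /= xsS].
have : x s != 0 by apply: contraNneq xsS => ->; rewrite ffunE.
move=> /H1 /andP [/andP [s0 _] _].
move: (H2 s S xsS) => /andP [sub /eqP cS].
rewrite /dowkerM cS eqxx andbT -card_gt0 cS /=.
have : s \subset extentM I S by apply: intent_ext.
by move=> H; apply: contraNneq s0 => E; rewrite -subset0 -E.
Qed.

Lemma dF_cchain (R : realType) (G M : finType) (I : G -> M -> bool) k (x : cchain R G M) :
  is_cchain I 0 k x -> is_cchain I 0 k.-1 (dF x).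
Proof.
move=> [H1 H2]; split => s; rewrite ffunE; last by apply: bd_chain_on.
move=> H; apply: H1; apply: contraNneq H => ->; by rewrite bd0.
Qed.

Lemma set_neq (T : finType) (A B : {set T}) x : x \in B -> x \notin A -> (A == B) = false.
Proof. by move=> xB xA; apply/negbTE; apply: contraNneq xA => ->. Qed.

Definition pk (G M : finType) (I : G -> M -> bool) (S : {set M}) : option G :=
  [pick g in extentM I S].

Lemma nonempty_intent (G M : finType) (I : G -> M -> bool) (s : {set G}) (S : {set M}) :
  S \subset intentG I s -> S != set0 -> intentG I s != set0.
Proof. by move=> sub; apply: contraNneq => E; rewrite -subset0 -E. Qed.

Lemma card_nonempty (T : finType) (S : {set T}) k : #|S| = k.+1 -> S != set0.
Proof. by move=> cS; rewrite -card_gt0 cS. Qed.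

Definition liftc (R : realType) (G M : finType) (I : G -> M -> bool) (z : chain R M) :
  cchain R G M :=
  [ffun s => [ffun S => if pk I S is Some g then (if s == [set g] then z S else 0) else 0]].

Lemma liftc_ok (R : realType) (G M : finType) (I : G -> M -> bool) k (z : chain R M) :
  is_Dchain I k z -> is_cchain I 0 k (liftc I z) /\ phif (liftc I z) = z.
Proof.
move=> Hz.
have supp : forall s S, liftc I z s S != 0 ->
    exists g, [/\ s = [set g], g \in extentM I S & z S != 0].
  move=> s S; rewrite !ffunE /pk; case: pickP => [g gE|]; last by rewrite eqxx.
  by case: (eqVneq s [set g]) => [->|_] H; [exists g|rewrite eqxx in H].
split; first split.
- move=> s /ffun_neq0 [S /supp [g [-> gE zS]]].
  move: (Hz S zS) => /andP [/andP [S0 _] /eqP cS].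
  rewrite /dowkerG -cards_eq0 !cards1 /= andbT.
  apply: nonempty_intent S0; apply: ext_intent; by rewrite sub1set.
- move=> s S /supp [g [-> gE zS]].
  move: (Hz S zS) => /andP [_ cS]; rewrite cS andbT.
  by apply: ext_intent; rewrite sub1set.
apply/ffunP => S; rewrite /phif sum_ffunE.
under eq_bigr do rewrite !ffunE.
rewrite /pk; case: pickP => [g gE|H].
  by rewrite -big_mkcond big_pred1_eq.
rewrite big1 //; apply/esym/eqP; apply: contraT => /Hz /andP [/andP [_ E] _].
by case/set0Pn: E => g; rewrite H.
Qed.

Definition kery (R : realType) (G M : finType) (I : G -> M -> bool) (x : cchain R G M) :
  cchain R G M :=
  [ffun e => [ffun S => if pk I S is Some g0 then
     \sum_(g | g != g0) (if e == [set g; g0] then sgn R g0 e * x [set g] S else 0)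
     else 0]].

Lemma kery_supp (R : realType) (G M : finType) (I : G -> M -> bool) (x : cchain R G M) e S :
  kery I x e S != 0 -> exists g g0, [/\ pk I S = Some g0, g != g0, e = [set g; g0]
                                      & x [set g] S != 0].
Proof.
rewrite !ffunE; case E: (pk I S) => [g0|]; last by rewrite eqxx.
move=> /sum_neq0 [g /andP [gg0]].
case: (eqVneq e [set g; g0]) => [->|]; last by rewrite eqxx.
by rewrite mulf_eq0 negb_or => /andP [_ H]; exists g, g0.
Qed.

Lemma pk_some (G M : finType) (I : G -> M -> bool) S g : pk I S = Some g -> g \in extentM I S.
Proof. by rewrite /pk; case: pickP => // g' H [<-]. Qed.

Lemma pk_none (G M : finType) (I : G -> M -> bool) S g : pk I S = None -> g \in extentM I S = false.
Proof. by rewrite /pk; case: pickP => // H _; apply: H. Qed.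

Lemma kery_ok (R : realType) (G M : finType) (I : G -> M -> bool) k (x : cchain R G M) :
  is_cchain I 0 k x -> phif x = 0 -> is_cchain I 1 k (kery I x) /\ cbd1 (kery I x) = x.
Proof.
move=> [H1 H2] Hphi.
have key : forall e S, kery I x e S != 0 ->
    [/\ dowkerG I e, #|e| == 2%N, S \subset intentG I e & #|S| == k.+1].
  move=> e S /kery_supp [g [g0 [E gg0 -> xS]]].
  have xg : x [set g] != 0 by apply: contraNneq xS => ->; rewrite ffunE.
  move: (H2 _ S xS) => /andP [sub cS].
  have sub2 : S \subset intentG I [set g; g0].
    apply: ext_intent; rewrite subUset [in X in _ && X]sub1set (pk_some E) andbT.
    by apply: intent_ext.
  rewrite cards2 gg0 cS sub2; split => //.
  rewrite /dowkerG; apply/andP; split.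
    by apply/set0Pn; exists g; rewrite !inE eqxx.
  by apply: nonempty_intent sub2 _; apply: card_nonempty (eqP cS).
split; first split.
- by move=> e /ffun_neq0 [S /key [? ? _ _]]; apply/andP.
- by move=> e S /key [_ _ ? ?]; apply/andP.
apply/ffunP => s; apply/ffunP => S; rewrite [in LHS]ffunE.
case: (boolP (#|s| == 1%N)) => [/cards1P [a ->]|s1]; last first.
  rewrite ffunE; apply/esym/eqP; apply: contraT => xS.
  have : x s != 0 by apply: contraNneq xS => ->; rewrite ffunE.
  by move=> /H1 /andP [_]; rewrite (negbTE s1).
rewrite sum_ffunE.
under eq_bigr do rewrite !ffunE.
case E: (pk I S) => [g0|]; last first.
  rewrite big1; last by move=> h _; rewrite scaler0.
  apply/esym/eqP; apply: contraT => xS.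
  move: (H2 _ S xS) => /andP [sub _].
  have := intent_ext sub; rewrite sub1set (pk_none _ E) //.
have xsing : forall t : {set G}, #|t| != 1%N -> x t S = 0.
  move=> t t1; have : x t == 0.
    by apply: contraT => /H1 /andP [_]; rewrite (negbTE t1).
  by move/eqP => ->; rewrite ffunE.
case: (eqVneq a g0) => [->|ag0].
-
  have tot : \sum_g x [set g] S = 0.
    rewrite -(sum_singl (F := fun s => x s S)) //.
    by rewrite -sum_ffunE -/(phif x) Hphi ffunE.
  rewrite (bigD1 g0) //= in tot.
  move/eqP: tot; rewrite addr_eq0 => /eqP ->.
  rewrite -sumrN; apply: eq_big => [h|h hg]; first by rewrite in_set1.
  rewrite in_set1 in hg.
  rewrite (bigD1 h) //= eqxx big1 ?addr0; last first.
    move=> g /andP [gg0 gh]; rewrite (@set_neq _ _ _ g) //.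
      by rewrite !inE eqxx.
    by rewrite !inE negb_or gh gg0.
  by rewrite scalerA sgn_pair_mul // scaleN1r.
-
  rewrite (bigD1 g0) /=; last by rewrite in_set1 eq_sym.
  rewrite [X in _ + X]big1 ?addr0; last first.
    move=> h /andP [ha hg0]; rewrite in_set1 in ha.
    rewrite big1 ?scaler0 // => g gg0.
    rewrite (@set_neq _ _ _ g0) //; first by rewrite !inE eqxx orbT.
    by rewrite !inE negb_or eq_sym hg0 /= eq_sym ag0.
  rewrite (bigD1 a) //= setUC eqxx big1 ?addr0; last first.
    move=> g /andP [ga gg0]; rewrite eq_sym (@set_neq _ _ _ a) //.
      by rewrite !inE eqxx.
    by rewrite !inE negb_or (eq_sym a g) gg0 ag0.
  by rewrite scalerA sgn_sq scale1r.
Qed.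

Theorem mainTheorem7 (R : realType) (G M : finType) (I : G -> M -> bool) (k : nat) :
  exists phi : {linear cchain R G M -> chain R M},
    induces_iso (H0cx_cycle I k) (H0cx_boundary I k)
                (dual_cycle I k) (dual_boundary I k) phi.
Proof.
exists (@phif R G M); split.
- move=> x [Hx [y [Hy Exy]]]; split; first exact: phi_Dchain Hx.
  by rewrite -phi_dF Exy phi_cbd1.
- move=> x [w [y [Hw [Hy ->]]]]; exists (phif w); split; first exact: phi_Dchain Hw.
  by rewrite raddfD /= phi_cbd1 addr0 phi_dF.
- move=> x [Hx _] [d [Hd Ed]].
  have [Hw Pw] := liftc_ok Hd.
  set w := liftc I d in Hw Pw.
  have Hz : is_cchain I 0 k (x - dF w) by apply: cchainB Hx (dF_cchain Hw).
  have P0 : phif (x - dF w) = 0 by rewrite raddfB /= phi_dF Pw Ed subrr.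
  have [Hy Ey] := kery_ok Hz P0.
  exists w, (kery I (x - dF w)); do !split => //.
  by rewrite Ey addrC subrK.
- move=> z [Hz bz].
  have [Hx Px] := liftc_ok Hz.
  set x := liftc I z in Hx Px.
  have P0 : phif (dF x) = 0 by rewrite phi_dF Px bz.
  have [Hy Ey] := kery_ok (dF_cchain Hx) P0.
  exists x; split; first by split => //; exists (kery I (dF x)).
  exists 0; split; first by move=> S; rewrite ffunE eqxx.
  by rewrite bd0 /= Px subrr.
Qed.
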